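(* Let $(\mathcal{A},\mathcal{E})$ be a finite, essentially small exact category and $X$ indecomposable. A chain $X_1\subsetneq_\mathcal{E}X_2\subsetneq_\mathcal{E}\cdots\subsetneq_\mathcal{E}X_n=X$ of indecomposable objects is an $\mathcal{E}$-Gabriel–Roiter filtration of $X$ if and only if it is a $\mu_\mathcal{E}$-filtration of $X$.
   Context: $(\mathcal{A},\mathcal{E})$ is a Quillen exact category; admissible monics are morphisms $i$ with $(i,d)\in\mathcal{E}$ for some $d$. $X\subsetneq_\mathcal{E}Y$ means there is an admissible monic $X\to Y$ that is not an isomorphism. A nonzero object $S$ is $\mathcal{E}$-simple if every object admitting an admissible monic into $S$ is zero or isomorphic to $S$. The $\mathcal{E}$-length $l_\mathcal{E}(X)$ is the supremum of all $n$ such that there is a chain $0=X_0\to\cdots\to X_n=X$ of admissible monics none of which is an isomorphism; $(\mathcal{A},\mathcal{E})$ is finite if $l_\mathcal{E}(X)<\infty$ for all $X$. $\mathfrak{S}(\mathbb{N})$ is the set of finite nonempty sequences of natural numbers, totally ordered by: $x\lll y$ iff $x=y$, or $x$ is a proper prefix of $y$, or at the first index $i$ where $x_i\neq y_i$ (both defined) one has $x_i>y_i$. For indecomposable $X$, $\mu_\mathcal{E}(X)$ is the $\lll$-maximum of $(l_\mathcal{E}(X_1),\dots,l_\mathcal{E}(X_n))$ over all chains $X_1\subsetneq_\mathcal{E}\cdots\subsetneq_\mathcal{E}X_n=X$ ($n\ge1$) with all $X_i$ indecomposable. A chain of indecomposables $X_1\subsetneq_\mathcal{E}\cdots\subsetneq_\mathcal{E}X_n=X$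 is a $\mu_\mathcal{E}$-filtration of $X$ if for all $i$, $\mu_\mathcal{E}(X_i)$ equals the prefix of length $i$ of $\mu_\mathcal{E}(X)$. For indecomposables $X,Y$, $X$ is an $\mathcal{E}$-Gabriel–Roiter predecessor of $Y$ if $X\subsetneq_\mathcal{E}Y$ and $\mu_\mathcal{E}(X)=\max\{\mu_\mathcal{E}(Y') : Y'\text{ indecomposable},\ Y'\subsetneq_\mathcal{E}Y\}$. A chain of indecomposables $X_1\subsetneq_\mathcal{E}\cdots\subsetneq_\mathcal{E}X_n=X$ is an $\mathcal{E}$-Gabriel–Roiter filtration of $X$ if $X_1$ is $\mathcal{E}$-simple and $X_{i-1}$ is an $\mathcal{E}$-Gabriel–Roiter predecessor of $X_i$ for all $2\le i\le n$. *)

(* Defs.v *)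
From HB Require Import structures.
From mathcomp Require Import all_boot all_order all_algebra.
Set Implicit Arguments. Unset Strict Implicit. Unset Printing Implicit Defensive.
Import GRing.Theory.
Local Open Scope ring_scope.

Definition exu (T : Type) (P : T -> Prop) : Prop :=
  exists x, P x /\ forall y, P y -> y = x.

Record AddCat := {
  Obj : Type;
  Hom : Obj -> Obj -> zmodType;
  idm : forall X, Hom X X;
  comp : forall X Y Z, Hom Y Z -> Hom X Y -> Hom X Z;
  compA : forall X Y Z W (h : Hom Z W) (g : Hom Y Z) (f : Hom X Y),
      comp h (comp g f) = comp (comp h g) f;
  comp1m : forall X Y (f : Hom X Y), comp (idm Y) f = f;
  compm1 : forall X Y (f : Hom X Y), comp f (idm X) = f;
  compDl : forall X Y Z (g g' : Hom Y Z) (f : Hom X Y),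
      comp (g + g') f = comp g f + comp g' f;
  compDr : forall X Y Z (g : Hom Y Z) (f f' : Hom X Y),
      comp g (f + f') = comp g f + comp g f';
  has_zero : exists Z : Obj, idm Z = 0;
  has_biprod : forall A B : Obj, exists (S : Obj)
      (i1 : Hom A S) (i2 : Hom B S) (p1 : Hom S A) (p2 : Hom S B),
      [/\ comp p1 i1 = idm A, comp p2 i2 = idm B,
          comp p1 i2 = 0, comp p2 i1 = 0 &
          comp i1 p1 + comp i2 p2 = idm S]
}.

Arguments idm {a} X.
Arguments comp {a X Y Z} g f.

Section AddCatDefs.
Variable C : AddCat.
Local Notation Obj := (Obj C).

Definition is_zero (X : Obj) : Prop := idm X = 0 :> Hom X X.

Definition is_iso (X Y : Obj) (f : Hom X Y) : Prop :=
  exists g : Hom Y X, comp g f = idm X /\ comp f g = idm Y.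

Definition isomorphic (X Y : Obj) : Prop := exists f : Hom X Y, is_iso f.

Definition is_biprod (X A B : Obj) : Prop :=
  exists (i1 : Hom A X) (i2 : Hom B X) (p1 : Hom X A) (p2 : Hom X B),
      [/\ comp p1 i1 = idm A, comp p2 i2 = idm B,
          comp p1 i2 = 0, comp p2 i1 = 0 &
          comp i1 p1 + comp i2 p2 = idm X].

Definition indecomposable (X : Obj) : Prop :=
  ~ is_zero X /\ forall A B, is_biprod X A B -> is_zero A \/ is_zero B.

Definition is_kernel (A B D : Obj) (i : Hom A B) (d : Hom B D) : Prop :=
  comp d i = 0 /\
  forall W (g : Hom W B), comp d g = 0 -> exu (fun h : Hom W A => comp i h = g).

Definition is_cokernel (A B D : Obj) (i : Hom A B) (d : Hom B D) : Prop :=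
  comp d i = 0 /\
  forall W (g : Hom B W), comp g i = 0 -> exu (fun h : Hom D W => comp h d = g).

End AddCatDefs.

(* Quillen exact categories (axioms as in Buehler, "Exact categories") *)
Record ExactCat := {
  ecat : AddCat;
  Ex : forall A B D : Obj ecat, Hom A B -> Hom B D -> Prop;
  Ex_kc : forall A B D (i : Hom A B) (d : Hom B D),
      Ex i d -> is_kernel i d /\ is_cokernel i d;
  Ex_iso : forall A B D A' B' D' (i : Hom A B) (d : Hom B D)
      (i' : Hom A' B') (d' : Hom B' D')
      (a : Hom A A') (b : Hom B B') (c : Hom D D'),
      Ex i d -> is_iso a -> is_iso b -> is_iso c ->
      comp b i = comp i' a -> comp c d = comp d' b -> Ex i' d';
  Ex_id_mono : forall A, exists D (d : Hom A D), Ex (idm A) d;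
  Ex_id_epi : forall A, exists D (i : Hom D A), Ex i (idm A);
  Ex_comp_mono : forall A B D (f : Hom A B) (g : Hom B D),
      (exists E (d : Hom B E), Ex f d) ->
      (exists E (d : Hom D E), Ex g d) ->
      exists E (d : Hom D E), Ex (comp g f) d;
  Ex_comp_epi : forall A B D (f : Hom A B) (g : Hom B D),
      (exists E (i : Hom E A), Ex i f) ->
      (exists E (i : Hom E B), Ex i g) ->
      exists E (i : Hom E A), Ex i (comp g f);
  Ex_pushout : forall A B A' (i : Hom A B) (f : Hom A A'),
      (exists D (d : Hom B D), Ex i d) ->
      exists B' (i' : Hom A' B') (f' : Hom B B'),
      [/\ comp i' f = comp f' i,
          (forall W (u : Hom A' W) (v : Hom B W), comp u f = comp v i ->
             exu (fun h : Hom B' W => comp h i' = u /\ comp h f' = v)) &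
          exists D (d : Hom B' D), Ex i' d];
  Ex_pullback : forall B D D' (d : Hom B D) (g : Hom D' D),
      (exists A (i : Hom A B), Ex i d) ->
      exists B' (d' : Hom B' D') (g' : Hom B' B),
      [/\ comp d g' = comp g d',
          (forall W (u : Hom W D') (v : Hom W B), comp g u = comp d v ->
             exu (fun h : Hom W B' => comp d' h = u /\ comp g' h = v)) &
          exists A (i : Hom A B'), Ex i d']
}.

Arguments Ex {e A B D} i d.

Section ExactDefs.
Variable E : ExactCat.
Local Notation C := (ecat E).
Local Notation Obj := (Obj C).

Definition adm_mono (X Y : Obj) (i : Hom X Y) : Prop :=
  exists (D : Obj) (d : Hom Y D), Ex i d.

Definition proper_sub (X Y : Obj) : Prop :=
  exists i : Hom X Y, adm_mono i /\ ~ is_iso i.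

Definition E_simple (S : Obj) : Prop :=
  ~ is_zero S /\
  forall (X : Obj) (i : Hom X S), adm_mono i -> is_zero X \/ isomorphic X S.

Fixpoint echain (n : nat) (X : Obj) : Prop :=
  match n with
  | 0 => is_zero X
  | n'.+1 => exists Y : Obj, echain n' Y /\ proper_sub Y X
  end.

(* l_E(X) = n  (the supremum is attained and equals n) *)
Definition lengthE (X : Obj) (n : nat) : Prop :=
  echain n X /\ forall m, echain m X -> (m <= n)%N.

(* (A,E) is finite: l_E(X) < oo for all X *)
Definition finiteE : Prop :=
  forall X : Obj, exists n : nat, forall m, echain m X -> (m <= n)%N.

(* xs = [X_1; ...; X_n] is a chain X_1 \subsetneq_E ... \subsetneq_E X_n = X
   of indecomposable objects (n >= 1) *)
Definition ind_chain (xs : seq Obj) (X : Obj) : Prop :=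
  [/\ xs <> [::], last X xs = X,
      (forall k, (k < size xs)%N -> indecomposable (nth X xs k)) &
      (forall k, (k.+1 < size xs)%N -> proper_sub (nth X xs k) (nth X xs k.+1))].

Definition attained (X : Obj) (s : seq nat) : Prop :=
  exists xs : seq Obj, ind_chain xs X /\ size s = size xs /\
    forall k, (k < size xs)%N -> lengthE (nth X xs k) (nth 0%N s k).

End ExactDefs.

(* The total order <<< on finite sequences of natural numbers:
   x <<< y iff x = y, or x is a proper prefix of y, or at the first index
   where they differ x_i > y_i. *)
Fixpoint lll (x y : seq nat) : bool :=
  match x, y with
  | [::], _ => true
  | _ :: _, [::] => false
  | a :: x', b :: y' => if a == b then lll x' y' else (b < a)%N
  end.

Section MuDefs.
Variable E : ExactCat.
Local Notation Obj := (Obj (ecat E)).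

Definition is_mu (X : Obj) (s : seq nat) : Prop :=
  attained X s /\ forall t, attained X t -> lll t s.

Definition mu_filtration (xs : seq Obj) (X : Obj) : Prop :=
  ind_chain xs X /\
  exists s, is_mu X s /\
    forall k, (k < size xs)%N -> is_mu (nth X xs k) (take k.+1 s).

Definition GR_predecessor (X Y : Obj) : Prop :=
  [/\ indecomposable X, indecomposable Y, proper_sub X Y &
      exists s, is_mu X s /\
        (forall (Y' : Obj) t, indecomposable Y' -> proper_sub Y' Y ->
           is_mu Y' t -> lll t s)].

Definition GR_filtration (xs : seq Obj) (X : Obj) : Prop :=
  [/\ ind_chain xs X, E_simple (nth X xs 0) &
      forall k, (0 < k < size xs)%N -> GR_predecessor (nth X xs k.-1) (nth X xs k)].

End MuDefs.

(* Main.v *)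
From Pilot Require Import Defs.
From mathcomp Require Import all_boot all_order all_algebra.
From HB Require Import structures.
From mathcomp Require Import zify.
From Stdlib Require Import Classical.
Import Pilot.Defs.
Set Implicit Arguments. Unset Strict Implicit. Unset Printing Implicit Defensive.
Import GRing.Theory.

Section Cat.
Variable C : AddCat.
Local Notation Obj := (Obj C).
Local Open Scope ring_scope.

Lemma comp0m (X Y Z : Obj) (f : Hom X Y) : comp (0 : Hom Y Z) f = 0.
Proof.
have H := compDl (0 : Hom Y Z) 0 f; rewrite addr0 in H.
apply/esym/(addrI (comp (0 : Hom Y Z) f)); by rewrite addr0 -H.
Qed.

Lemma compm0 (X Y Z : Obj) (g : Hom Y Z) : comp g (0 : Hom X Y) = 0.
Proof.
have H := compDr g (0 : Hom X Y) 0; rewrite addr0 in H.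
apply/esym/(addrI (comp g (0 : Hom X Y))); by rewrite addr0 -H.
Qed.

Lemma zero_hom_l (X Y : Obj) (f : Hom X Y) : is_zero X -> f = 0.
Proof. move=> hz; by rewrite -(compm1 f) hz compm0. Qed.

Lemma zero_hom_r (X Y : Obj) (f : Hom X Y) : is_zero Y -> f = 0.
Proof. move=> hz; by rewrite -(comp1m f) hz comp0m. Qed.

Lemma iso_id (X : Obj) : is_iso (idm X).
Proof. exists (idm X); by rewrite comp1m. Qed.

Lemma isomorphic_sym (X Y : Obj) : isomorphic X Y -> isomorphic Y X.
Proof. case=> f [g [h1 h2]]; exists g; exists f; by split. Qed.

Lemma zero_isomorphic (X Y : Obj) : is_zero X -> isomorphic X Y -> is_zero Y.
Proof.
move=> hz [f [g [h1 h2]]]; rewrite /is_zero -h2.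
by rewrite (zero_hom_r g hz) compm0.
Qed.

Lemma iso_reflect (W X Y : Obj) (i : Hom W X) (f : Hom X Y) :
  is_iso f -> is_iso (comp f i) -> is_iso i.
Proof.
move=> [g [gf fg]] [h [h1 h2]].
exists (comp h f); split; first by rewrite -compA.
rewrite -[LHS]comp1m -gf -compA (compA f i) (compA (comp f i) h) h2 comp1m gf //.
Qed.

End Cat.


Section Ex.
Variable E : ExactCat.
Local Notation C := (ecat E).
Local Notation Obj := (Obj C).
Local Open Scope ring_scope.

Lemma iso_adm (W X Y : Obj) (i : Hom W X) (f : Hom X Y) :
  adm_mono i -> is_iso f -> adm_mono (comp f i).
Proof.
move=> [D [d hd]] [g [gf fg]].
exists D, (comp d g).
apply: (Ex_iso hd (iso_id W) (ex_intro _ g (conj gf fg)) (iso_id D)).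
  by rewrite compm1.
by rewrite comp1m -compA gf compm1.
Qed.

Lemma proper_sub_iso (W X Y : Obj) :
  proper_sub W X -> isomorphic X Y -> proper_sub W Y.
Proof.
move=> [i [ha hn]] [f hf]; exists (comp f i); split; first exact: iso_adm.
by move=> /(iso_reflect hf).
Qed.

Lemma zero_sub (Z : Obj) : ~ is_zero Z -> exists D : Obj, is_zero D /\ proper_sub D Z.
Proof.
move=> hZ; have [D [i hi]] := Ex_id_epi Z.
have [[hk1 hk2] _] := Ex_kc hi.
have i0 : i = 0 by rewrite -hk1 comp1m.
have hD : is_zero D.
  have [h [_ hu]] := hk2 D i hk1.
  rewrite /is_zero; rewrite (hu (idm D)) ?compm1 // (hu 0) ?compm0 //.
exists D; split => //; exists i; split; first by exists Z, (idm Z).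
move=> [g [_ h2]]; apply: hZ; by rewrite /is_zero -h2 i0 comp0m.
Qed.

End Ex.


Section Ex.
Variable E : ExactCat.
Local Notation C := (ecat E).
Local Notation Obj := (Obj C).
Local Open Scope ring_scope.

Lemma split_sub (Z A B : Obj) : is_biprod Z A B -> ~ is_zero B -> proper_sub A Z.
Proof.
move=> [i1 [i2 [p1 [p2 [e11 e22 e12 e21 esum]]]]] hB.
have [DA [dA hdA]] := Ex_id_mono A.
have dA0 : dA = 0.
  have [_ [hc _]] := Ex_kc hdA; by rewrite -hc compm1.
have [B' [d' [g' [_ hu [A2 [i' hi']]]]]] :=
  Ex_pullback (0 : Hom B DA) (ex_intro _ A (ex_intro _ (idm A) hdA)).
have [phi [[phi1 phi2] _]] : exu (fun h : Hom Z B' => comp d' h = p2 /\ comp g' h = p1).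
  apply: hu; by rewrite dA0 !comp0m.
pose psi := comp i1 g' + comp i2 d'.
have psiphi : comp psi phi = idm Z.
  by rewrite /psi compDl -!compA phi1 phi2.
have p2psi : comp p2 psi = d'.
  by rewrite /psi compDr !compA e21 e22 comp0m comp1m add0r.
have p1psi : comp p1 psi = g'.
  by rewrite /psi compDr !compA e11 e12 comp0m comp1m addr0.
have phipsi : comp phi psi = idm B'.
  have [h0 [_ hu0]] : exu (fun h : Hom B' B' => comp d' h = d' /\ comp g' h = g').
    apply: hu; by rewrite dA0 !comp0m.
  rewrite (hu0 (idm B')) ?compm1 // (hu0 (comp phi psi)) // !compA phi1 phi2.
  by split.
have psiiso : is_iso psi by exists phi.
have [[k1 k2] _] := Ex_kc hi'.
have key : comp (comp i1 p1) (comp psi i') = comp psi i'.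
  have z : comp (comp i2 p2) (comp psi i') = 0.
    by rewrite -compA (compA p2) p2psi k1 compm0.
  by rewrite -[LHS]addr0 -z -compDl esum comp1m.
pose a := comp p1 (comp psi i').
have [h [hh _]] : exu (fun h : Hom A A2 => comp i' h = comp phi i1).
  apply: k2; by rewrite compA phi1 e21.
have aiso : is_iso a.
  exists h; split.
    have [h1 [_ hu1]] : exu (fun x : Hom A2 A2 => comp i' x = i').
      by apply: k2.
    rewrite (hu1 (idm A2)) ?compm1 // (hu1 (comp h a)) //.
    rewrite compA hh /a -(compA phi i1) (compA i1) key compA phipsi comp1m.
    done.
  by rewrite /a -!compA hh (compA psi phi) psiphi comp1m e11.
exists i1; split; last first.
  move=> [q [_ hq]]; apply: hB.
  rewrite /is_zero -e22.
  have -> : p2 = 0 by rewrite -[p2]compm1 -hq compA e21 comp0m.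
  by rewrite comp0m.
exists B, p2.
apply: (Ex_iso hi' aiso psiiso (iso_id B)).
  by rewrite /a compA key.
by rewrite comp1m p2psi.
Qed.

End Ex.


Lemma lll_refl x : lll x x.
Proof. by elim: x => //= a x IH; rewrite eqxx. Qed.

Lemma lll_anti x y : lll x y -> lll y x -> x = y.
Proof.
elim: x y => [|a x IH] [|b y] //=.
case: (a =P b) => [<-|ab]; first by rewrite eqxx => h1 h2; rewrite (IH y).
have ba : (b == a) = false by apply/eqP => h; apply: ab.
rewrite ba => h1 h2; lia.
Qed.

Lemma lll_trans x y z : lll x y -> lll y z -> lll x z.
Proof.
elim: x y z => [|a x IH] [|b y] [|c z] //=.
have [e1|n1] := eqVneq a b; have [e2|n2] := eqVneq b c;
  have [e3|n3] := eqVneq a c; move=> h1 h2.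
all: first [exact: IH h1 h2 | lia].
Qed.


Lemma lll_rcons (L : nat) t u :
  all (fun a => a < L) t -> all (fun a => a < L) u ->
  lll (rcons t L) (rcons u L) = lll t u.
Proof.
elim: t u => [|a t IH] [|b u] //=.
- by rewrite eqxx.
- move=> _ /andP [hb _].
  have -> : (L == b) = false by apply/eqP; lia.
  done.
- move=> /andP [ha _] _.
  have -> : (a == L) = false by apply/eqP; lia.
  lia.
- move=> /andP [_ ht] /andP [_ hu]; by rewrite IH.
Qed.

Lemma nat_max (P : nat -> Prop) N :
  (exists k, P k) -> (forall k, P k -> k <= N) ->
  exists n, P n /\ forall m, P m -> m <= n.
Proof.
elim: N => [|N IH] [k hk] hb.
  exists k; split => // m hm; have := hb m hm; have := hb k hk; lia.
case: (classic (P N.+1)) => h.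
  by exists N.+1; split.
apply: IH; first by exists k.
move=> m hm; have := hb m hm; case: (m =P N.+1) => [e|ne]; first by subst.
lia.
Qed.

Lemma nat_min (P : nat -> Prop) :
  (exists k, P k) -> exists n, P n /\ forall m, P m -> n <= m.
Proof.
move=> [k hk].
suff : forall K k, k <= K -> P k -> exists n, P n /\ forall m, P m -> n <= m.
  by move=> /(_ k k (leqnn k) hk).
elim=> [|K IH] j hj hP.
  exists j; split => // m _; lia.
case: (classic (exists i, i < j /\ P i)) => [[i [hi Pi]]|hn].
  apply: (IH i) => //; lia.
exists j; split => // m hm.
case: (leqP j m) => // hmj; exfalso; apply: hn; by exists m.
Qed.

Lemma seq_max n (P : seq nat -> Prop) :
  (forall t, P t -> size t <= n) -> (exists t, P t) ->
  exists m, P m /\ forall t, P t -> lll t m.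
Proof.
elim: n P => [|n IH] P hs [t0 ht0].
  exists t0; split => // t ht.
  have := hs t ht; have := hs t0 ht0; rewrite !leqn0 !size_eq0 => /eqP -> /eqP -> //.
case: (classic (exists a t, P (a :: t))) => [hne|hemp]; last first.
  exists [::]; split.
    by case: t0 ht0 => // a t h; exfalso; apply: hemp; exists a, t.
  move=> [|a t] // h; exfalso; apply: hemp; by exists a, t.
have [a [[t1 ha] amin]] := @nat_min (fun a => exists t, P (a :: t)) hne.
have [m [hm mmax]] := @IH (fun t => P (a :: t)) (fun t h => hs _ h) (ex_intro _ t1 ha).
exists (a :: m); split => // [[|b t]] // hb /=.
have := amin b (ex_intro _ t hb).
have [e|ba] := eqVneq b a => h; first by subst; exact: mmax.
lia.
Qed.

Lemma inc_le (s : seq nat) :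
  (forall k, k.+1 < size s -> nth 0 s k < nth 0 s k.+1) ->
  forall j d, j + d < size s -> nth 0 s j + d <= nth 0 s (j + d).
Proof.
move=> h j; elim=> [|d IH] hd; first by rewrite !addn0.
have hd' : j + d < size s by lia.
have hd'' : (j + d).+1 < size s by lia.
have := IH hd'; have := h (j + d) hd''.
rewrite -addnS; lia.
Qed.


Section Len.
Variable E : ExactCat.
Hypothesis hfin : finiteE E.
Local Notation C := (ecat E).
Local Notation Obj := (Obj C).

Lemma echain_iso n (X Y : Obj) : echain n X -> isomorphic X Y -> echain n Y.
Proof.
case: n => [|n] /= h hi; first exact: zero_isomorphic h hi.
case: h => W [hw hp]; exists W; split => //; exact: proper_sub_iso hp hi.
Qed.

Lemma len_exists (X : Obj) : exists n, lengthE X n.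
Proof.
have [N hN] := hfin X.
have hex : exists k, echain k X.
  case: (classic (is_zero X)) => hz; first by exists 0.
  have [D [hD hp]] := zero_sub hz; exists 1, D; split => //.
have [n [h1 h2]] := @nat_max (fun k => echain k X) N hex hN.
by exists n.
Qed.

Lemma len_unique (X : Obj) n m : lengthE X n -> lengthE X m -> n = m.
Proof. move=> [h1 m1] [h2 m2]; apply/eqP; by rewrite eqn_leq m1 // m2. Qed.

Lemma len_lt (X Y : Obj) n m : lengthE X n -> lengthE Y m -> proper_sub X Y -> n < m.
Proof. move=> [hx _] [_ hm] hp; apply: hm; by exists X. Qed.

Lemma len_iso (X Y : Obj) n : lengthE X n -> isomorphic X Y -> lengthE Y n.
Proof.
move=> [h1 h2] hi; split; first exact: echain_iso h1 hi.
move=> m hm; apply: h2; exact: echain_iso hm (isomorphic_sym hi).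
Qed.

Lemma simple_of (x : Obj) : ~ is_zero x ->
  (forall W : Obj, indecomposable W -> ~ proper_sub W x) -> E_simple x.
Proof.
move=> hx hno; split => // Z i hi.
case: (classic (is_iso i)) => hiso; first by right; exists i.
case: (classic (is_zero Z)) => hz; first by left.
exfalso.
have [Lx hLx] := len_exists x.
suff : forall N n (Z : Obj), n <= N -> lengthE Z n -> ~ is_zero Z -> proper_sub Z x ->
    exists W, indecomposable W /\ proper_sub W x.
  have [n hn] := len_exists Z.
  move=> /(_ n n Z (leqnn n) hn hz (ex_intro _ i (conj hi hiso))) [W [hW hp]].
  exact: hno hW hp.
elim=> [|N IH] n Z0 hn hZ hz0 hp.
  all: case: (classic (indecomposable Z0)) => hind; first by exists Z0.
  all: have [A [B [hAB hnot]]] : exists A B, is_biprod Z0 A B /\ ~ (is_zero A \/ is_zero B).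
  1,3: apply: NNPP => hne; apply: hind; split => // A B hAB;
       apply: NNPP => hn'; apply: hne; by exists A, B.
  all: have [hA hB] := not_or_and _ _ hnot.
  all: have hAZ := split_sub hAB hB.
  all: have [m hm] := len_exists A.
  all: have hmn := len_lt hm hZ hAZ.
  1: lia.
  have hAx : proper_sub A x.
    case: hAZ => j [hj hnj]; case: hp => k [hk hnk].
    exists (comp k j); split; first exact: Ex_comp_mono hj hk.
    move=> hiso2.
    have hx' := len_iso hm (ex_intro _ _ hiso2).
    have := len_unique hx' hLx.
    have := len_lt hZ hLx (ex_intro _ k (conj hk hnk)).
    lia.
  apply: (IH m A) => //; lia.
Qed.

Lemma chain_nth (ys : seq Obj) (Y d : Obj) k : k < size ys -> nth d ys k = nth Y ys k.
Proof. move=> h; exact: set_nth_default. Qed.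
Arguments chain_nth {ys} Y {d k}.

Lemma attained_single (Y : Obj) L : indecomposable Y -> lengthE Y L -> attained Y [:: L].
Proof.
move=> hY hL; exists [:: Y]; split; last by split => // [[|k]].
split => // [[|k]] //.
Qed.

Lemma attained_rcons (Y X : Obj) t L : attained Y t -> proper_sub Y X ->
  indecomposable X -> lengthE X L -> attained X (rcons t L).
Proof.
move=> [ys [[nz hl hind hp] [hsz hlen]]] hYX hX hL.
exists (rcons ys X); split; last split.
- split.
  + by move/(congr1 size); rewrite size_rcons.
  + by rewrite last_rcons.
  + move=> k; rewrite size_rcons ltnS nth_rcons => hk'.
    case: ltnP => hk; first by rewrite (chain_nth Y) //; apply: hind.
    by have -> : k == size ys by rewrite eqn_leq hk hk'.
  + move=> k; rewrite size_rcons ltnS !nth_rcons => hk.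
    have hk1 : k < size ys by lia.
    rewrite hk1 (chain_nth Y hk1).
    case: ltnP => hk2.
      rewrite (chain_nth Y) //. exact: hp.
    have e : k.+1 = size ys by lia.
    rewrite e eqxx.
    have -> : nth Y ys k = Y.
      by rewrite -[in RHS]hl -nth_last -e.
    exact: hYX.
- by rewrite !size_rcons hsz.
- move=> k; rewrite size_rcons ltnS !nth_rcons hsz => hk.
  case: ltnP => hk2; first by rewrite (chain_nth Y hk2); apply: hlen.
  have -> : k == size ys by rewrite eqn_leq hk hk2.
  exact: hL.
Qed.

End Len.


Section Att.
Variable E : ExactCat.
Hypothesis hfin : finiteE E.
Local Notation C := (ecat E).
Local Notation Obj := (Obj C).

Lemma attained_last (Y : Obj) s L : attained Y s -> lengthE Y L ->
  [/\ s = rcons (take (size s).-1 s) L, all (fun a => a < L) (take (size s).-1 s),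
      size s <= L.+1 & 0 < size s].
Proof.
move=> [ys [[nz hl hind hp] [hsz hlen]]] hL.
have npos : 0 < size ys by move: nz; case: (ys).
have inc : forall k, k.+1 < size s -> nth 0 s k < nth 0 s k.+1.
  move=> k hk; rewrite hsz in hk.
  apply: (len_lt (hlen k (ltnW hk)) (hlen k.+1 hk)); exact: hp.
have slast : nth 0 s (size s).-1 = L.
  have hk : (size s).-1 < size ys by lia.
  apply: (len_unique (hlen _ hk)).
  by rewrite hsz nth_last hl.
have hil := inc_le inc.
split.
- rewrite -[LHS](take_size s).
  have -> : size s = (size s).-1.+1 by lia.
  rewrite (take_nth 0) ?slast //; lia.
- apply/(all_nthP 0) => i; rewrite size_take.
  have hps : (size s).-1 < size s by lia.
  rewrite hps => hi.
  rewrite nth_take //.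
  have hh : i + ((size s).-1 - i) < size s by lia.
  have := hil _ _ hh.
  have -> : i + ((size s).-1 - i) = (size s).-1 by lia.
  rewrite slast; lia.
- have hh : 0 + (size s).-1 < size s by lia.
  have := hil _ _ hh.
  rewrite add0n slast; lia.
- by rewrite hsz.
Qed.

Lemma attained_dec (X : Obj) t L : attained X t -> lengthE X L ->
  t = [:: L] \/ exists (Y : Obj) t', [/\ indecomposable Y, proper_sub Y X, attained Y t' & t = rcons t' L].
Proof.
move=> ht hL.
have [e _ _ tpos] := attained_last ht hL.
case: ht => ys [[nz hl hind hp] [hsz hlen]].
case: (leqP (size t) 1) => hs.
  left; rewrite e.
  have -> : (size t).-1 = 0 by lia.
  by rewrite take0.
right.
set n := size t in hs e.
pose Y := nth X ys (n.-2).
have hn1 : n.-1 < size ys by lia.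
have hn1' : n.-1 < size t by lia.
exists Y, (take n.-1 t); split => //.
- apply: hind; lia.
- have hh : n.-2.+1 < size ys by lia.
  have := hp n.-2 hh.
  have -> : n.-2.+1 = (size ys).-1 by lia.
  by rewrite nth_last hl.
- exists (take n.-1 ys); split; last split.
  + split.
    * by move/(congr1 size); rewrite size_take hn1 /=; lia.
    * rewrite -nth_last size_take hn1.
      rewrite nth_take; last lia.
      rewrite (chain_nth X); last lia.
      by [].
    * move=> k; rewrite size_take hn1 => hk.
      rewrite nth_take // (chain_nth X); last lia.
      apply: hind; lia.
    * move=> k; rewrite size_take hn1 => hk.
      rewrite !nth_take //; try lia.
      rewrite !(chain_nth X); try lia.
      apply: hp; lia.
  + by rewrite !size_take hsz.
  + move=> k; rewrite size_take hn1 => hk.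
    rewrite !nth_take //; try lia.
    rewrite (chain_nth X); last lia.
    apply: hlen; lia.
Qed.

Lemma mu_exists (Y : Obj) t : attained Y t -> exists m, is_mu Y m.
Proof.
move=> ht; have [L hL] := len_exists hfin Y.
have [m [hm hmax]] := @seq_max L.+1 (fun t => attained Y t)
  (fun t h => let: And4 _ _ b _ := attained_last h hL in b) (ex_intro _ t ht).
by exists m; split.
Qed.

Lemma mu_unique (Y : Obj) a b : is_mu Y a -> is_mu Y b -> a = b.
Proof. move=> [ha ma] [hb mb]; apply: lll_anti; [exact: mb | exact: ma]. Qed.

End Att.


Section Main.
Variable E : ExactCat.
Hypothesis hfin : finiteE E.
Local Notation C := (ecat E).
Local Notation Obj := (Obj C).

Lemma attained_all (Y : Obj) s LY L : attained Y s -> lengthE Y LY -> LY < L ->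
  all (fun a => a < L) s.
Proof.
move=> h hLY hlt; have [e ha _ _] := attained_last h hLY.
rewrite e all_rcons hlt /=.
apply: sub_all ha => a /=; lia.
Qed.

Lemma GR_to_mu (X : Obj) xs : ind_chain xs X -> GR_filtration xs X -> mu_filtration xs X.
Proof.
move=> hxs [_ hsimp hpred]; have [nz hl hind hp] := hxs.
have npos : 0 < size xs by move: nz; case: (xs).
have claim : forall k, k < size xs -> exists u, [/\ size u = k.+1,
    is_mu (nth X xs k) u & forall j, j <= k -> is_mu (nth X xs j) (take j.+1 u)].
  elim=> [|k IH] hk.
    have [L0 hL0] := len_exists hfin (nth X xs 0).
    have hmu : is_mu (nth X xs 0) [:: L0].
      split; first exact: attained_single (hind 0 hk) hL0.
      move=> t ht; case: (attained_dec ht hL0) => [->|[Y [t' [hY hYp hYt ->]]]].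
        exact: lll_refl.
      exfalso; case: hsimp => _ hs; case: hYp => i [hi hni].
      have [LY hLY] := len_exists hfin Y.
      case: (hs Y i hi) => [hz|hiso]; first by case: hY.
      have := len_unique (len_iso hLY hiso) hL0.
      have := len_lt hLY hL0 (ex_intro _ i (conj hi hni)).
      lia.
    exists [:: L0]; split => // j; rewrite leqn0 => /eqP -> //.
  have [u [hsu hmu hpre]] := IH (ltnW hk).
  have [L hL] := len_exists hfin (nth X xs k.+1).
  have [Lk hLk] := len_exists hfin (nth X xs k).
  have hkL : Lk < L := len_lt hLk hL (hp k hk).
  have hk2 : 0 < k.+1 < size xs by rewrite hk.
  have [_ _ _ [s' [hs'mu hs'max]]] := hpred k.+1 hk2.
  have es' : s' = u := mu_unique hs'mu hmu.
  subst s'.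
  have hallu : all (fun a => a < L) u := attained_all hmu.1 hLk hkL.
  have hmu' : is_mu (nth X xs k.+1) (rcons u L).
    split; first exact: attained_rcons hmu.1 (hp k hk) (hind _ hk) hL.
    move=> t ht; case: (attained_dec ht hL) => [->|[Y [t' [hY hYp hYt ->]]]].
      have -> : [:: L] = rcons [::] L by [].
      by rewrite lll_rcons.
    have [mY hmY] := mu_exists hfin hYt.
    have h1 := hmY.2 t' hYt.
    have h2 := hs'max Y mY hY hYp hmY.
    have [LY hLY] := len_exists hfin Y.
    rewrite lll_rcons //; last exact: attained_all hYt hLY (len_lt hLY hL hYp).
    exact: lll_trans h1 h2.
  exists (rcons u L); split => //; first by rewrite size_rcons hsu.
  move=> j hj; case: (j =P k.+1) => [->|hne].
    by rewrite take_oversize // size_rcons hsu.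
  rewrite -cats1 takel_cat; last by rewrite hsu; lia.
  apply: hpre; lia.
have hn : (size xs).-1 < size xs by lia.
have [u [hsu hmu hpre]] := claim _ hn.
split => //; exists u; split.
  by rewrite nth_last hl in hmu.
move=> k hk; apply: hpre; lia.
Qed.

Lemma mu_to_GR (X : Obj) xs : ind_chain xs X -> mu_filtration xs X -> GR_filtration xs X.
Proof.
move=> hxs [_ [s [hsmu hpre]]]; have [nz hl hind hp] := hxs.
have npos : 0 < size xs by move: nz; case: (xs).
split => //.
- apply: (simple_of hfin); first by case: (hind 0 npos).
  move=> W hW hWp.
  have [w hw] := len_exists hfin W.
  have [L0 hL0] := len_exists hfin (nth X xs 0).
  have hmu0 := hpre 0 npos.
  have [e _ hsz _] := attained_last hmu0.1 hL0.
  have hs1 : size (take 1 s) <= 1.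
    rewrite size_take; case: ifP => // /negbT; rewrite -leqNgt //.
  have e0 : (size (take 1 s)).-1 = 0 by lia.
  rewrite e0 take0 in e.
  have hat := attained_rcons (attained_single hW hw) hWp (hind 0 npos) hL0.
  have := hmu0.2 _ hat.
  rewrite e /=.
  have hwL := len_lt hw hL0 hWp.
  have -> : (w == L0) = false by apply/eqP; lia.
  lia.
- move=> [|j] // /andP [_ hk] /=.
  have [L hL] := len_exists hfin (nth X xs j.+1).
  have [Lj hLj] := len_exists hfin (nth X xs j).
  have hjL : Lj < L := len_lt hLj hL (hp j hk).
  split; [exact: hind j (ltnW hk) | exact: hind j.+1 hk | exact: hp j hk |].
  exists (take j.+1 s); split; first exact: hpre j (ltnW hk).
  move=> Y' t hY' hYp hmuY.
  have hmu1 := hpre j.+1 hk.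
  have hat := attained_rcons hmuY.1 hYp (hind _ hk) hL.
  have hle := hmu1.2 _ hat.
  have [LY hLY] := len_exists hfin Y'.
  have hallt : all (fun a => a < L) t := attained_all hmuY.1 hLY (len_lt hLY hL hYp).
  have hallu : all (fun a => a < L) (take j.+1 s) := attained_all (hpre j (ltnW hk)).1 hLj hjL.
  case: (ltnP j.+1 (size s)) => hs.
    have e2 := take_nth 0 hs.
    have [e _ _ _] := attained_last hmu1.1 hL.
    rewrite e2 in e.
    case: (rcons_inj e) => _ eL.
    by rewrite e2 eL lll_rcons in hle.
  have [e1 _ _ _] := attained_last (hpre j (ltnW hk)).1 hLj.
  have [e2 _ _ _] := attained_last hmu1.1 hL.
  rewrite take_oversize in e1; last lia.
  rewrite take_oversize in e2; last lia.
  have := congr1 (last 0) (etrans (esym e1) e2).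
  rewrite !last_rcons; lia.
Qed.

End Main.

Theorem proposition7p11 (E : ExactCat) (hfin : finiteE E)
    (X : Obj (ecat E)) (hX : indecomposable X)
    (xs : seq (Obj (ecat E))) (hxs : ind_chain xs X) :
  GR_filtration xs X <-> mu_filtration xs X.
Proof. split; [exact: GR_to_mu | exact: mu_to_GR]. Qed.
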